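(* Let $z\in\mathcal F^{\mathsf{BC}}_n$. Then $z\in\mathcal G^{\mathsf{BC}}_n$ if and only if there is an integer $0\le i\le n$ with $i\equiv n\pmod 2$ such that $-n\le z(n+1)<z(n+2)<\dots<z(n+i)\le n$ and $z(n+i+2j)=n+i+2j-1$ for each integer $j>0$ with $n+i+2j\le 2n$.
   Context: $W^{\mathsf{BC}}_{2n}$ is the group of permutations $w$ of $\{\pm1,\dots,\pm2n\}$ with $w(-i)=-w(i)$. $\mathcal F^{\mathsf{BC}}_n=\{z\in W^{\mathsf{BC}}_{2n}:z=z^{-1},\ |z(i)|\neq i\text{ for all }i\in[2n]\}$. An integer $i>0$ is a visible descent of $z$ if $z(i+1)<\min\{i,z(i)\}$ or $z(i)<-i$. $\mathcal G^{\mathsf{BC}}_n$ is the set of $z\in\mathcal F^{\mathsf{BC}}_n$ with no visible descent greater than $n$. *)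

(* Defs.v *)
From mathcomp Require Import all_boot all_order all_algebra.
Set Implicit Arguments. Unset Strict Implicit. Unset Printing Implicit Defensive.
Import Order.TTheory GRing.Theory Num.Theory.
Local Open Scope ring_scope.

(* A signed permutation w of {+-1,...,+-N} is represented by a function
   int -> int; only its values on the domain {i : 1 <= |i| <= N} matter. *)
Definition in_dom (N : nat) (i : int) : bool := (1 <= `|i|) && (`|i| <= N%:Z).

Definition is_signed_perm (N : nat) (w : int -> int) : Prop :=
  [/\ (forall i, in_dom N i -> in_dom N (w i)),
      (forall i j, in_dom N i -> in_dom N j -> w i = w j -> i = j),
      (forall k, in_dom N k -> exists2 i, in_dom N i & w i = k)
    & (forall i, in_dom N i -> w (- i) = - w i)].

Definition in_FBC (n : nat) (z : int -> int) : Prop :=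
  [/\ is_signed_perm n.*2 z,
      (forall i, in_dom n.*2 i -> z (z i) = i)
    & (forall i : nat, (1 <= i <= n.*2)%N -> `|z i%:Z| != i%:Z)].

(* Standard convention: elements of W^BC_N act on all of Z, fixing every
   integer outside {+-1,...,+-N}. *)
Definition ext (N : nat) (w : int -> int) (i : int) : int :=
  if in_dom N i then w i else i.

Definition vis_descent (n : nat) (z : int -> int) (i : int) : bool :=
  (0 < i) &&
  ((ext n.*2 z (i + 1) < Num.min i (ext n.*2 z i)) || (ext n.*2 z i < - i)).

Definition in_GBC (n : nat) (z : int -> int) : Prop :=
  in_FBC n z /\ (forall i : int, n%:Z < i -> ~~ vis_descent n z i).

(* Main.v *)
Require Import Defs.
From mathcomp Require Import all_boot all_order all_algebra.
From mathcomp Require Import zify.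
Import Order.TTheory GRing.Theory Num.Theory.
Local Open Scope ring_scope.

Section Aux.
Variables (n : nat) (z : int -> int).
Hypothesis H : in_FBC n z.

Lemma domI (x : int) : 1 <= `|x| <= n.*2%:Z -> in_dom n.*2 x.
Proof. by rewrite /in_dom. Qed.

Lemma dom_nat (p : nat) : (1 <= p <= n.*2)%N -> 1 <= `|z p%:Z| <= n.*2%:Z.
Proof.
move=> hp; case: H => [[d _ _ _] _ _].
have := d p%:Z (domI p%:Z ltac:(lia)); by rewrite /in_dom.
Qed.

Lemma inv_nat (p : nat) : (1 <= p <= n.*2)%N -> z (z p%:Z) = p%:Z.
Proof. move=> hp; case: H => _ hi _; exact: hi (domI p%:Z ltac:(lia)). Qed.

Lemma inj_nat (p q : nat) : (1 <= p <= n.*2)%N -> (1 <= q <= n.*2)%N ->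
  z p%:Z = z q%:Z -> p = q.
Proof.
move=> hp hq e; case: H => [[_ hj _ _] _ _].
have := hj _ _ (domI p%:Z ltac:(lia)) (domI q%:Z ltac:(lia)) e; lia.
Qed.

Lemma fpf_nat (p : nat) : (1 <= p <= n.*2)%N -> `|z p%:Z| != p%:Z.
Proof. move=> hp; case: H => _ _ hf; exact: hf. Qed.

Lemma neg_int (x : int) : 1 <= `|x| <= n.*2%:Z -> z (- x) = - z x.
Proof. move=> hx; case: H => [[_ _ _ hn] _ _]; exact: hn (domI _ hx). Qed.

Hypothesis HG : forall i : int, n%:Z < i -> ~~ vis_descent n z i.

Lemma gAB (p : nat) : (n < p < n.*2)%N ->
  - p%:Z <= z p%:Z /\ (p%:Z <= z p.+1%:Z \/ z p%:Z <= z p.+1%:Z).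
Proof.
move=> hp; have := HG p%:Z ltac:(lia).
have D1 : in_dom n.*2 p%:Z by apply: domI; lia.
have D2 : in_dom n.*2 (p%:Z + 1) by apply: domI; lia.
rewrite /vis_descent /ext D1 D2.
have -> : p%:Z + 1 = p.+1%:Z by lia.
lia.
Qed.

Lemma big_pos (p : nat) : (n < p <= n.*2)%N -> n%:Z < `|z p%:Z| -> 0 < z p%:Z.
Proof.
move=> hp hb; rewrite ltNge; apply/negP => hneg.
have [q Hq] : exists q : nat, z p%:Z = - q%:Z by exists (absz (z p%:Z)); lia.
have dp := dom_nat p ltac:(lia).
have fp := fpf_nat p ltac:(lia).
have zq : z q%:Z = - p%:Z.
  have -> : q%:Z = - z p%:Z by lia.
  rewrite neg_int; last lia.
  by rewrite inv_nat //; lia.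
have Ap : (p < n.*2)%N -> - p%:Z <= z p%:Z by move=> h; case: (gAB p ltac:(lia)).
have Aq : (q < n.*2)%N -> - q%:Z <= z q%:Z by move=> h; case: (gAB q ltac:(lia)).
lia.
Qed.

Lemma big_pair (p q : nat) : (n < p <= n.*2)%N -> z p%:Z = q%:Z -> (p < q)%N -> q = p.+1.
Proof.
move=> hnp hzp hpq.
have dp := dom_nat p ltac:(lia).
have hq2 : (q <= n.*2)%N by lia.
have zq : z q%:Z = p%:Z by rewrite -hzp inv_nat //; lia.
apply/eqP; rewrite eqn_leq; apply/andP; split; last by []. rewrite leqNgt; apply/negP => hlt.
have claim : forall m : nat, (p + 1 + m < q)%N -> z (q - 1 - m)%N%:Z < p%:Z.
  elim=> [|m IH] hm.
    have := gAB (q - 1 - 0)%N ltac:(lia).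
    have -> : (q - 1 - 0).+1 = q by lia.
    move=> [_ hB].
    have ne : z (q - 1 - 0)%N%:Z != z q%:Z.
      apply/eqP => e; have := inj_nat (q - 1 - 0)%N q ltac:(lia) ltac:(lia) e; lia.
    lia.
  have := gAB (q - 1 - m.+1)%N ltac:(lia).
  have -> : (q - 1 - m.+1).+1 = (q - 1 - m)%N by lia.
  have := IH ltac:(lia). lia.
have := claim (q - p - 2)%N ltac:(lia).
have -> : (q - 1 - (q - p - 2))%N = p.+1 by lia.
have := gAB p ltac:(lia). lia.
Qed.

Lemma big_next (x : nat) : (n < x <= n.*2)%N -> n%:Z < `|z x%:Z| ->
  z x.-1%:Z != x%:Z -> z x%:Z = x.+1%:Z.
Proof.
move=> hx hb hne.
have pos := big_pos x hx hb.
have [q Hq] : exists q : nat, z x%:Z = q%:Z by exists (absz (z x%:Z)); lia.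
have dx := dom_nat x ltac:(lia).
have fx := fpf_nat x ltac:(lia).
case: (ltngtP x q) => hxq.
- by rewrite Hq (big_pair x q ltac:(lia) Hq hxq).
- have zq : z q%:Z = x%:Z by rewrite -Hq inv_nat //; lia.
  have := big_pair q x ltac:(lia) zq hxq => e.
  move: hne zq; rewrite e /= => hne zq; by rewrite zq eqxx in hne.
- lia.
Qed.

Lemma forward : exists i : nat,
     [/\ (i <= n)%N, odd i = odd n,
         (forall k : nat, (1 <= k <= i)%N ->
            - (n%:Z) <= z (n + k)%N%:Z <= n%:Z),
         (forall k : nat, (1 <= k < i)%N ->
            z (n + k)%N%:Z < z (n + k.+1)%N%:Z)
       & (forall j : nat, (0 < j)%N -> (n + i + j.*2 <= n.*2)%N ->
            z (n + i + j.*2)%N%:Z = (n + i + j.*2)%N%:Z - 1)].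
Proof.
pose P := fun j : nat => (j == n) || (n%:Z < `|z (n + j).+1%:Z|).
have exP : exists j, P j by exists n; rewrite /P eqxx.
case: (ex_minnP exP) => i Pi mini.
have iln : (i <= n)%N by apply: mini; rewrite /P eqxx.
have small : forall k, (1 <= k <= i)%N -> `|z (n + k)%N%:Z| <= n%:Z.
  move=> k hk; have : ~~ P k.-1 by apply/negP => /mini; lia.
  rewrite /P negb_or => /andP [_].
  have -> : (n + k.-1).+1 = (n + k)%N by lia.
  lia.
have claim : forall j, ((n + i + j.*2).+1 <= n.*2)%N ->
    z (n + i + j.*2).+1%:Z = (n + i + j.*2).+2%:Z.
  elim=> [|j IH] hj.
    have E : (n + i + 0.*2)%N = (n + i)%N by lia.
    rewrite E in hj *.
    have Pi' : n%:Z < `|z (n + i).+1%:Z|.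
      move: Pi; rewrite /P; case: eqP => [e|_] //=. lia.
    apply: big_next => //; first lia.
    rewrite /=; apply/eqP => e.
    have zx : z (n + i).+1%:Z = (n + i)%:Z by rewrite -e inv_nat //; lia.
    case: (posnP i) => hi; first lia.
    have := small i ltac:(lia). lia.
  have E : (n + i + j.+1.*2).+1 = (n + i + j.*2).+3 by lia.
  rewrite E in hj *.
  have IH' := IH ltac:(lia).
  have zx1 : z (n + i + j.*2).+2%:Z = (n + i + j.*2).+1%:Z.
    rewrite -IH' inv_nat //; lia.
  have hb : n%:Z < `|z (n + i + j.*2).+3%:Z|.
    rewrite ltNge; apply/negP => hs.
    have := gAB (n + i + j.*2).+2 ltac:(lia). lia.
  apply: big_next => //; first lia.
  rewrite /= zx1; lia.
exists i; split.
- exact: iln.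
- apply/eqP/negPn/negP => hne.
  have hj : ((n + i + ((n - i).-1./2).*2).+1 <= n.*2)%N by lia.
  have := claim _ hj.
  have E : (n + i + ((n - i).-1./2).*2).+1 = n.*2 by lia.
  rewrite E => h.
  have := dom_nat n.*2 ltac:(lia). lia.
- move=> k hk; have := small k hk; lia.
- move=> k hk.
  have := gAB (n + k)%N ltac:(lia).
  have -> : (n + k).+1 = (n + k.+1)%N by lia.
  have := small k ltac:(lia); have := small k.+1 ltac:(lia).
  have ne : z (n + k)%N%:Z != z (n + k.+1)%N%:Z.
    apply/eqP => e; have := inj_nat (n + k)%N (n + k.+1)%N ltac:(lia) ltac:(lia) e; lia.
  lia.
- move=> j hj hj2.
  have := claim j.-1 ltac:(lia).
  have E : (n + i + (j.-1).*2).+2 = (n + i + j.*2)%N by lia.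
  rewrite E => h.
  have := inv_nat (n + i + (j.-1).*2).+1 ltac:(lia).
  rewrite h => ->. lia.
Qed.

End Aux.

Lemma desc_free (n : nat) (z : int -> int) (p : nat) : (n < p < n.*2)%N ->
  - p%:Z <= z p%:Z -> (p%:Z <= z p.+1%:Z \/ z p%:Z <= z p.+1%:Z) ->
  ~~ vis_descent n z p%:Z.
Proof.
move=> hp hA hB.
have D1 : in_dom n.*2 p%:Z by rewrite /in_dom; lia.
have D2 : in_dom n.*2 (p%:Z + 1) by rewrite /in_dom; lia.
rewrite /vis_descent /ext D1 D2.
have -> : p%:Z + 1 = p.+1%:Z by lia.
lia.
Qed.

Lemma backward (n : nat) (z : int -> int) (i : nat) : in_FBC n z ->
  (i <= n)%N -> odd i = odd n ->
  (forall k : nat, (1 <= k <= i)%N -> - (n%:Z) <= z (n + k)%N%:Z <= n%:Z) ->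
  (forall k : nat, (1 <= k < i)%N -> z (n + k)%N%:Z < z (n + k.+1)%N%:Z) ->
  (forall j : nat, (0 < j)%N -> (n + i + j.*2 <= n.*2)%N ->
            z (n + i + j.*2)%N%:Z = (n + i + j.*2)%N%:Z - 1) ->
  forall i0 : int, n%:Z < i0 -> ~~ vis_descent n z i0.
Proof.
move=> H h1 h2 h3 h4 h5 i0 hi0.
have [hge|hlt] := boolP (n.*2%:Z <= i0).
  rewrite /vis_descent /ext.
  have -> : in_dom n.*2 (i0 + 1) = false by rewrite /in_dom; lia.
  case: ifP => D2.
    case: H => [[d _ _ _] _ _]; have := d _ D2; rewrite /in_dom; lia.
  rewrite /in_dom in D2; lia.
have [p E] : exists p : nat, i0 = p%:Z by exists (absz i0); lia.
move: hi0 hlt; rewrite E.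
move=> hi0 hlt.
have hp : (n < p < n.*2)%N by lia.
have tail : forall p, (n + i < p <= n.*2)%N -> z p%:Z = p%:Z - 1 \/ z p%:Z = p%:Z + 1.
  move=> q hq; case: (boolP (odd (q - (n + i)))) => hod.
    right.
    have := h5 ((q - (n + i)).+1./2) ltac:(lia) ltac:(lia).
    have -> : (n + i + ((q - (n + i)).+1./2).*2)%N = q.+1 by lia.
    move=> e.
    have := @inv_nat n z H q.+1 ltac:(lia).
    rewrite e.
    have -> : q.+1%:Z - 1 = q%:Z by lia.
    lia.
  left.
  have := h5 ((q - (n + i))./2) ltac:(lia) ltac:(lia).
  have -> : (n + i + ((q - (n + i))./2).*2)%N = q by lia.
  by [].
apply: desc_free => //.
  case: (leqP p (n + i)) => hpi.
    have := h3 (p - n)%N ltac:(lia).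
    have -> : (n + (p - n))%N = p by lia.
    lia.
  have := tail p ltac:(lia); lia.
case: (leqP p.+1 (n + i)) => hpi.
  have := h4 (p - n)%N ltac:(lia).
  have -> : (n + (p - n))%N = p by lia.
  have -> : (n + (p - n).+1)%N = p.+1 by lia.
  lia.
have := tail p.+1 ltac:(lia); lia.
Qed.

Theorem mainTheorem7 (n : nat) (z : int -> int) :
  in_FBC n z ->
  (in_GBC n z <->
   exists i : nat,
     [/\ (i <= n)%N, odd i = odd n,
         (forall k : nat, (1 <= k <= i)%N ->
            - (n%:Z) <= z (n + k)%N%:Z <= n%:Z),
         (forall k : nat, (1 <= k < i)%N ->
            z (n + k)%N%:Z < z (n + k.+1)%N%:Z)
       & (forall j : nat, (0 < j)%N -> (n + i + j.*2 <= n.*2)%N ->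
            z (n + i + j.*2)%N%:Z = (n + i + j.*2)%N%:Z - 1)]).
Proof.
move=> H; split.
  by case=> _ HG; exact: forward H HG.
case=> i [h1 h2 h3 h4 h5]; split => //.
exact: backward H h1 h2 h3 h4 h5.
Qed.
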